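(* Let $\mathcal H=\mathbb C^d$ with orthonormal basis $\{|k\rangle\}_{k=1}^d$, $d<\infty$. Let $\mathsf{MultiPCov}$ be the monoid of multiphase covariant channels and $\mathsf{BPres}$ the monoid of basis-preserving channels on $M_d(\mathbb C)$. Then, with commutants taken inside the set of all quantum channels on $M_d(\mathbb C)$, $\mathsf{MultiPCov}'=\mathsf{BPres}$ and $\mathsf{BPres}'=\mathsf{MultiPCov}$.
   Context: For $\boldsymbol\theta=(\theta_1,\dots,\theta_d)\in[0,2\pi)^d$ let $U_{\boldsymbol\theta}=\sum_k e^{i\theta_k}|k\rangle\langle k|$ and $\mathcal U_{\boldsymbol\theta}=U_{\boldsymbol\theta}\cdot U_{\boldsymbol\theta}^\dagger$. A quantum channel $\mathcal M$ is multiphase covariant if $\mathcal U_{\boldsymbol\theta}\circ\mathcal M=\mathcal M\circ\mathcal U_{\boldsymbol\theta}$ for all $\boldsymbol\theta$. A channel $\mathcal B$ is basis-preserving if $\mathcal B(|k\rangle\langle k|)=|k\rangle\langle k|$ for all $k$. The commutant of a set of channels is the set of channels commuting under composition with each of its elements. *)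

(* Defs.v *)
(* The complex field is modelled by an arbitrary
   numClosedFieldType C (e.g. algC, or C itself). *)
From HB Require Import structures.
From mathcomp Require Import all_boot all_order all_algebra.
Set Implicit Arguments. Unset Strict Implicit. Unset Printing Implicit Defensive.
Import Order.TTheory GRing.Theory Num.Theory.
Local Open Scope ring_scope.

Section QChannels.
Variables (C : numClosedFieldType) (d : nat).

Definition adjmx (m n : nat) (A : 'M[C]_(m, n)) : 'M[C]_(n, m) :=
  (map_mx (fun z : C => z^*) A)^T.

Definition block_psd (n : nat) (X : 'I_n -> 'I_n -> 'M[C]_d) : Prop :=
  forall v : 'I_n -> 'cV[C]_d,
    0 <= \sum_(i < n) \sum_(j < n) (adjmx (v i) *m X i j *m v j) 0 0.

Definition is_linear_map (M : 'M[C]_d -> 'M[C]_d) : Prop :=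
  forall (a : C) (A B : 'M[C]_d), M (a *: A + B) = a *: M A + M B.

(* complete positivity: id_n (x) M maps PSD to PSD for every n *)
Definition completely_positive (M : 'M[C]_d -> 'M[C]_d) : Prop :=
  forall (n : nat) (X : 'I_n -> 'I_n -> 'M[C]_d),
    block_psd X -> block_psd (fun i j => M (X i j)).

Definition trace_preserving (M : 'M[C]_d -> 'M[C]_d) : Prop :=
  forall A : 'M[C]_d, \tr (M A) = \tr A.

Definition quantum_channel (M : 'M[C]_d -> 'M[C]_d) : Prop :=
  [/\ is_linear_map M, completely_positive M & trace_preserving M].

(* U_theta, parameterised by the phases e^{i theta_k} (unit-modulus scalars) *)
Definition phase_unitary (ph : 'I_d -> C) : 'M[C]_d := diag_mx (\row_k ph k).

Definition unitary_conj (ph : 'I_d -> C) (A : 'M[C]_d) : 'M[C]_d :=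
  phase_unitary ph *m A *m adjmx (phase_unitary ph).

Definition channels_commute (M N : 'M[C]_d -> 'M[C]_d) : Prop :=
  forall A, M (N A) = N (M A).

Definition multiphase_covariant (M : 'M[C]_d -> 'M[C]_d) : Prop :=
  quantum_channel M /\
  forall ph : 'I_d -> C, (forall k, `|ph k| = 1) ->
    channels_commute (unitary_conj ph) M.

Definition basis_preserving (M : 'M[C]_d -> 'M[C]_d) : Prop :=
  quantum_channel M /\ forall k : 'I_d, M (delta_mx k k) = delta_mx k k.

Definition commutant (S : ('M[C]_d -> 'M[C]_d) -> Prop)
    (N : 'M[C]_d -> 'M[C]_d) : Prop :=
  quantum_channel N /\ forall M, S M -> channels_commute M N.

End QChannels.

(* Main.v *)
Require Import Defs.
From mathcomp Require Import all_boot all_order all_algebra.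
From mathcomp Require Import ring.
Set Implicit Arguments. Unset Strict Implicit. Unset Printing Implicit Defensive.
Import Order.TTheory GRing.Theory Num.Theory.
Local Open Scope ring_scope.

Section Aux.
Variables (C : numClosedFieldType) (d : nat).
Local Notation M := ('M[C]_d).
Local Notation E := (@delta_mx C d d).

Lemma sum_delta (a : 'I_d) (F : 'I_d -> C) :
  \sum_x (F x * (x == a)%:R) = F a.
Proof.
rewrite (bigD1 a) //= eqxx mulr1 big1 ?addr0 // => x /negbTE ->; by rewrite mulr0.
Qed.

Lemma sum_delta' (a : 'I_d) (F : 'I_d -> C) :
  \sum_x ((x == a)%:R * F x) = F a.
Proof. rewrite -[RHS](sum_delta a); apply: eq_bigr => x _; exact: mulrC. Qed.

Lemma qfE (u v : 'cV[C]_d) (X : M) :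
  (adjmx u *m X *m v) 0 0 = \sum_a \sum_b (u a 0)^* * X a b * v b 0.
Proof.
rewrite mxE exchange_big /=; apply: eq_bigr => b _.
rewrite mxE mulr_suml; apply: eq_bigr => a _; by rewrite !mxE.
Qed.

Lemma qf_delta (u v : 'cV[C]_d) a b :
  (adjmx u *m E a b *m v) 0 0 = (u a 0)^* * v b 0.
Proof.
rewrite qfE (bigD1 a) //= [X in _ + X]big1 ?addr0 => [|x xa]; last first.
  by apply: big1 => y _; rewrite mxE (negbTE xa) mulr0 mul0r.
rewrite (bigD1 b) //= [X in _ + X]big1 ?addr0 => [|y yb]; last by rewrite mxE (negbTE yb) andbF mulr0 mul0r.
by rewrite mxE !eqxx mulr1.
Qed.

Lemma qfZ (u v : 'cV[C]_d) (s : C) (X : M) :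
  (adjmx u *m (s *: X) *m v) 0 0 = s * (adjmx u *m X *m v) 0 0.
Proof. by rewrite -scalemxAr -scalemxAl mxE. Qed.

Lemma qf_vec (c c' : C) a b (X : M) :
  (adjmx (c *: delta_mx a (0 : 'I_1)) *m X *m (c' *: delta_mx b (0 : 'I_1))) 0 0
   = c^* * X a b * c'.
Proof.
rewrite qfE (bigD1 a) //= [X in _ + X]big1 ?addr0 => [|x xa]; last first.
  by apply: big1 => y _; rewrite !mxE (negbTE xa) mulr0 rmorph0 !mul0r.
rewrite (bigD1 b) //= [X in _ + X]big1 ?addr0 => [|y yb]; last by rewrite !mxE (negbTE yb) mulr0 mulr0.
by rewrite !mxE !eqxx !mulr1.
Qed.


Section Lin.
Variable (N : M -> M).
Hypothesis HN : is_linear_map N.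

Lemma lin0 : N 0 = 0.
Proof.
have := HN 1 0 0; rewrite !scale1r addr0 => h.
by apply: (addrI (N 0)); rewrite addr0 [RHS]h.
Qed.

Lemma linD A B : N (A + B) = N A + N B.
Proof. by rewrite -[A in LHS]scale1r HN scale1r. Qed.

Lemma linZ a A : N (a *: A) = a *: N A.
Proof. by rewrite -[_ *: A]addr0 HN lin0 addr0. Qed.

Lemma linS (I : Type) (r : seq I) (P : pred I) (F : I -> M) :
  N (\sum_(i <- r | P i) F i) = \sum_(i <- r | P i) N (F i).
Proof. exact: (big_morph N linD lin0). Qed.

Lemma lin_comb (c : 'I_d -> 'I_d -> C) (F : 'I_d -> 'I_d -> M) :
  N (\sum_i \sum_j c i j *: F i j) = \sum_i \sum_j c i j *: N (F i j).
Proof.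
rewrite linS; apply: eq_bigr => i _; rewrite linS; apply: eq_bigr => j _.
by rewrite linZ.
Qed.

Lemma lin_expand A : N A = \sum_i \sum_j A i j *: N (E i j).
Proof. by rewrite {1}(matrix_sum_delta A) lin_comb. Qed.

End Lin.

Lemma ucE (ph : 'I_d -> C) (A : M) a b :
  unitary_conj ph A a b = ph a * A a b * (ph b)^*.
Proof.
rewrite /unitary_conj /phase_unitary.
have -> : adjmx (diag_mx (\row_k ph k)) = diag_mx (\row_k (ph k)^*).
  apply/matrixP => x y; rewrite !mxE.
  by case: (eqVneq x y) => [->|_]; rewrite ?mulr1n ?mulr0n ?rmorph0.
rewrite (mul_mx_diag (diag_mx (\row_k ph k) *m A)).
by rewrite (mul_diag_mx (\row_k ph k) A) !mxE.
Qed.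

Lemma unit_conj (z : C) : `|z| = 1 -> z * z^* = 1.
Proof. by move=> h; rewrite -normCK h expr1n. Qed.

Lemma shape_offdiag (X : M) i j :
  (forall a b, (a != i) || (b != j) -> X a b = 0) -> X = X i j *: E i j.
Proof.
move=> h; apply/matrixP => a b; rewrite !mxE.
case: (eqVneq a i) => [->|ai]; case: (eqVneq b j) => [->|bj];
  rewrite ?mulr1 ?mulr0 // h // ?ai ?bj ?orbT //.
Qed.


Section UC.
Variable ph : 'I_d -> C.
Hypothesis Hph : forall k, `|ph k| = 1.

Lemma uc_lin : is_linear_map (unitary_conj ph).
Proof.
move=> a A B; apply/matrixP => x y; rewrite !(ucE, mxE); ring.
Qed.

Lemma uc_tp : trace_preserving (unitary_conj ph).
Proof.
move=> A; rewrite /mxtrace; apply: eq_bigr => i _; rewrite ucE.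
by rewrite mulrAC unit_conj // mul1r.
Qed.

Lemma uc_cp : completely_positive (unitary_conj ph).
Proof.
move=> n X HX v.
pose w := fun p => \col_a ((ph a)^* * v p a 0).
apply: le_trans (HX w) _; rewrite le_eqVlt; apply/orP; left; apply/eqP.
apply: eq_bigr => p _; apply: eq_bigr => q _; rewrite !qfE.
apply: eq_bigr => a _; apply: eq_bigr => b _; rewrite ucE !mxE rmorphM /= conjCK; ring.
Qed.

Lemma uc_E k : unitary_conj ph (E k k) = E k k.
Proof.
apply/matrixP => x y; rewrite ucE !mxE.
case: (eqVneq x k) => [->|xk]; case: (eqVneq y k) => [->|yk] /=;
  rewrite ?mulr1 ?mulr0 ?mul0r //.
by rewrite unit_conj.
Qed.

Lemma uc_channel : quantum_channel (unitary_conj ph).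
Proof. split; [exact: uc_lin | exact: uc_cp | exact: uc_tp]. Qed.

Lemma uc_bp : basis_preserving (unitary_conj ph).
Proof. split; [exact: uc_channel | exact: uc_E]. Qed.

End UC.


Lemma Ci_neq1 : ('i : C) != 1.
Proof.
apply/eqP => h; have := sqrCi C; rewrite h expr1n => /eqP.
by rewrite -subr_eq0 opprK -mulr2n pnatr_eq0.
Qed.

Lemma Ci_neqN1 : ('i : C) != -1.
Proof.
apply/eqP => h; have := sqrCi C; rewrite h sqrrN expr1n => /eqP.
by rewrite -subr_eq0 opprK -mulr2n pnatr_eq0.
Qed.

Lemma Ci_neqN : ('i : C) != - 'i.
Proof.
apply/eqP => h; have : 'i *+ 2 == 0 :> C by rewrite mulr2n {1}h addNr.
by rewrite mulrn_eq0 /= (negbTE (neq0Ci C)).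
Qed.

Lemma psd_form_zero (c x y : C) :
  (forall t, 0 <= c + t^* * x + t * y) -> x = 0 /\ y = 0.
Proof.
move=> H.
have c0 : 0 <= c by have := H 0; rewrite conjC0 !mul0r !addr0.
have cr : c^* = c by apply: geC0_conj.
have e1 : x^* + y^* = x + y.
  have := geC0_conj (H 1); rewrite conjC1 !mul1r !rmorphD /= cr => h.
  by apply: (addrI c); rewrite !addrA.
have e2 : 'i * x^* - 'i * y^* = - 'i * x + 'i * y.
  have := geC0_conj (H 'i); rewrite !rmorphD !rmorphM /= cr.
  rewrite conjCK conjCi => h.
  apply: (addrI c); rewrite !addrA -h; ring.
have e3 : x^* - y^* = - x + y.
  by apply: (mulfI (neq0Ci C)); rewrite mulrBr e2; ring.
have yx : y = x^*.
  have h : (x^* - y) *+ 2 = (x^* + y^* - (x+y)) + (x^* - y^* - (-x + y)) by rewrite mulr2n; ring.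
  rewrite e1 e3 !subrr addr0 in h.
  by move/eqP: h; rewrite mulrn_eq0 /= subr_eq0 => /eqP.
subst y; case: (eqVneq x 0) => [->|x0]; first by rewrite conjC0.
exfalso.
have p0 : 0 < x * x^* by rewrite mul_conjC_gt0.
pose k := (c + 1) / (x * x^* *+ 2).
have k0 : 0 <= k.
  by apply: divr_ge0; [rewrite addr_ge0 | rewrite mulrn_wge0 // ltW].
have kr : k^* = k by apply: geC0_conj.
have pn0 : x * x^* *+ 2 != 0 by rewrite mulrn_eq0 /= gt_eqF.
have := H (- (x * k)); rewrite rmorphN rmorphM /= kr.
have -> : c + - (x^* * k) * x + - (x * k) * x^* = c - k * (x * x^* *+ 2) by rewrite mulr2n; ring.
by rewrite /k mulfVK // opprD addrA subrr add0r oppr_ge0 ler10.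
Qed.



Lemma sel_psd n (sel : 'I_n -> 'I_d) : block_psd (fun p q => E (sel p) (sel q)).
Proof.
move=> v.
under eq_bigr => p _ do under eq_bigr => q _ do rewrite qf_delta.
under eq_bigr => p _ do rewrite -mulr_sumr.
rewrite -mulr_suml -rmorph_sum mulrC; exact: mul_conjC_ge0.
Qed.


Lemma ge0_eq (x y : C) : x = y -> 0 <= y -> 0 <= x.
Proof. by move->. Qed.

Section BP.
Variable B : M -> M.
Hypothesis HB : basis_preserving B.

Lemma bp_form i j a b (s0 s1 : C) :
  0 <= s0^* * E i i a a * s0 + s0^* * B (E i j) a b * s1
       + s1^* * B (E j i) b a * s0 + s1^* * E j j b b * s1.
Proof.
case: HB => [[_ Hcp _] Hkk].
pose sel := fun p : 'I_2 => if p == ord0 then i else j.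
have := Hcp 2 _ (sel_psd sel).
move=> /(_ (fun p => if p == ord0 then s0 *: delta_mx a 0 else s1 *: delta_mx b 0)).
rewrite !big_ord_recl !big_ord0 /= !addr0 !qf_vec /sel /= !Hkk.
by rewrite addrA.
Qed.

Lemma bp_offdiag i j : i != j -> B (E i j) = B (E i j) i j *: E i j.
Proof.
move=> ij; apply: shape_offdiag => a b /orP [ai|bj].
  have [] := @psd_form_zero (E j j b b) (B (E i j) a b) (B (E j i) b a) => // t.
  have := bp_form i j a b t 1.
  rewrite [E i i a a]mxE (negbTE ai) /= mulr0 mul0r add0r conjC1 !mul1r !mulr1.
  by move=> h; apply: (ge0_eq _ h); ring.
have [] := @psd_form_zero (E i i a a) (B (E j i) b a) (B (E i j) a b) => // t.
have := bp_form i j a b 1 t.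
rewrite [E j j b b]mxE (negbTE bj) /= ?andbF mulr0 mul0r addr0 conjC1 !mul1r !mulr1.
by move=> h; apply: (ge0_eq _ h); ring.
Qed.

Lemma bp_diag (D : M) : (forall a b, a != b -> D a b = 0) -> B D = D.
Proof.
move=> hD; case: HB => [[Hl _ _] Hkk].
rewrite (lin_expand Hl) [RHS](matrix_sum_delta D).
apply: eq_bigr => a _; apply: eq_bigr => b _.
case: (eqVneq a b) => [->|ab]; first by rewrite Hkk.
by rewrite hD // !scale0r.
Qed.

End BP.


Definition phm (m : 'I_d) (k : 'I_d) : C := if k == m then 'i else 1.

Lemma phm_norm m k : `|phm m k| = 1.
Proof. by rewrite /phm; case: eqP => _; rewrite ?normCi ?normr1. Qed.

Lemma gE m a b : phm m a * (phm m b)^* =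
  if a == m then (if b == m then 1 else 'i) else (if b == m then - 'i else 1).
Proof.
rewrite /phm; case: (a == m); case: (b == m);
  rewrite ?conjCi ?conjC1 ?mulr1 ?mul1r //.
by rewrite mulrN -expr2 sqrCi opprK.
Qed.

Lemma uc_delta ph i j : unitary_conj ph (E i j) = (ph i * (ph j)^*) *: E i j.
Proof.
apply/matrixP => x y; rewrite ucE !mxE.
case: (eqVneq x i) => [->|xi]; case: (eqVneq y j) => [->|yj] /=;
  rewrite ?mulr1 ?mulr0 ?mul0r //.
Qed.

Section MPC.
Variable Mc : M -> M.
Hypothesis HM : multiphase_covariant Mc.

Lemma mpc_zero m i j a b :
  phm m a * (phm m b)^* != phm m i * (phm m j)^* -> Mc (E i j) a b = 0.
Proof.
case: HM => [[Hl _ _] Hc] hne.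
have := Hc (phm m) (phm_norm m) (E i j).
rewrite uc_delta (linZ Hl) => /matrixP /(_ a b); rewrite ucE mxE => h.
have : (phm m a * (phm m b)^* - phm m i * (phm m j)^*) * Mc (E i j) a b = 0.
  by rewrite mulrBl -h; ring.
by move/eqP; rewrite mulf_eq0 subr_eq0 (negbTE hne) /= => /eqP.
Qed.

Lemma mpc_diag k a b : a != b -> Mc (E k k) a b = 0.
Proof.
move=> ab; have ba : (b == a) = false by rewrite eq_sym (negbTE ab).
apply: (mpc_zero (m := a)); rewrite !gE eqxx ba.
by case: (k == a); rewrite Ci_neq1.
Qed.

Lemma mpc_offdiag i j : i != j -> Mc (E i j) = Mc (E i j) i j *: E i j.
Proof.
move=> ij; have ji : (j == i) = false by rewrite eq_sym (negbTE ij).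
have case1 : forall a b, a != i -> Mc (E i j) a b = 0.
  move=> a b ai; apply: (mpc_zero (m := i)); rewrite !gE eqxx (negbTE ai) ji.
  case: (b == i); first by rewrite eq_sym Ci_neqN.
  by rewrite eq_sym Ci_neq1.
apply: shape_offdiag => a b /orP [ai|bj]; first exact: case1.
case: (eqVneq a i) => [->|ai]; last exact: case1.
apply: (mpc_zero (m := j)); rewrite !gE eqxx (negbTE ij) (negbTE bj).
by rewrite eq_sym eqr_oppLR Ci_neqN1.
Qed.

End MPC.


Lemma core_commute (B Mc : M -> M) : basis_preserving B -> multiphase_covariant Mc ->
  forall A, Mc (B A) = B (Mc A).
Proof.
move=> HB HM A; have [[HlB _ _] Hkk] := HB; have [[HlM _ _] _] := HM.
rewrite (lin_expand HlB A) (lin_expand HlM A) (lin_comb HlM) (lin_comb HlB).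
apply: eq_bigr => i _; apply: eq_bigr => j _; congr (_ *: _).
case: (eqVneq i j) => [<-|ij].
  by rewrite Hkk (bp_diag HB) // => a b; apply: mpc_diag.
have hB := bp_offdiag HB ij; have hM := mpc_offdiag HM ij.
set b := B (E i j) i j in hB *; set m := Mc (E i j) i j in hM *.
by rewrite hB hM (linZ HlM) (linZ HlB) hB hM !scalerA mulrC.
Qed.

Definition trc (k : 'I_d) (A : M) : M := \tr A *: E k k.

Lemma tr_delta k : \tr (E k k) = 1.
Proof.
rewrite /mxtrace (bigD1 k) //= big1 ?addr0 => [|x xk]; first by rewrite mxE !eqxx.
by rewrite mxE (negbTE xk).
Qed.

Lemma trc_channel k : quantum_channel (trc k).
Proof.
split.
- by move=> a A B; rewrite /trc mxtraceD mxtraceZ scalerDl scalerA.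
- move=> n X HX v; rewrite /trc.
  under eq_bigr => p _ do under eq_bigr => q _ do rewrite qfZ qf_delta /mxtrace mulr_suml.
  under eq_bigr => p _ do rewrite exchange_big /=.
  rewrite exchange_big /=; apply: sumr_ge0 => l _.
  apply: (ge0_eq _ (HX (fun p => v p k 0 *: delta_mx l 0))).
  apply: eq_bigr => p _; apply: eq_bigr => q _; rewrite qf_vec; ring.
- by move=> A; rewrite /trc mxtraceZ tr_delta mulr1.
Qed.

Lemma trc_mpc k : multiphase_covariant (trc k).
Proof.
split; first exact: trc_channel.
move=> ph Hph A; rewrite /trc (linZ (uc_lin ph)) uc_E //.
by rewrite uc_tp.
Qed.

End Aux.

Theorem mainTheorem7 (C : numClosedFieldType) (d : nat) :
  (forall N : 'M[C]_d -> 'M[C]_d,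
     commutant (@multiphase_covariant C d) N <-> basis_preserving N) /\
  (forall N : 'M[C]_d -> 'M[C]_d,
     commutant (@basis_preserving C d) N <-> multiphase_covariant N).
Proof.
split=> N; split.
- case=> HN Hc; split=> // k.
  have := Hc (@trc C d k) (@trc_mpc C d k) (delta_mx k k).
  case: HN => Hl _ Htp.
  by rewrite /trc Htp tr_delta scale1r.
- move=> HB; split; first by case: HB.
  by move=> Mc HM A; exact: (core_commute HB HM A).
- case=> HN Hc; split=> // ph Hph A.
  exact: Hc (unitary_conj ph) (uc_bp Hph) A.
- move=> HM; split; first by case: HM.
  by move=> Mc HB A; rewrite (core_commute HB HM).
Qed.
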